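(* Let $r\ge 2$ be an integer, let $\varphi$ be an instance of 2-Clause 3-SAT, and let $G(\varphi)$ be the graph constructed from $\varphi$ and $r$ as described in the context. If $\mathrm{col}_r(G(\varphi)) \leq 6$, then $\varphi$ has a satisfying assignment.
   Context: 2-Clause 3-SAT: given a CNF formula $\varphi$ with clauses $c_1,\dots,c_m$ over variables $x_1,\dots,x_n$ in which each clause contains at most 3 literals and each literal ($x_j$ or $\overline{x}_j$) appears in exactly 2 clauses, decide whether $\varphi$ is satisfiable. It is assumed throughout that no variable appears twice in a single clause and there are no single-literal clauses (so each clause has 2 or 3 literals). An $\ell$-subdivided edge between $a$ and $b$ is an induced path with $\ell$ internal vertices (subdivision vertices) joining $a$ and $b$, whose internal vertices have no other neighbors. Construction of $G(\varphi)$: for each clause $c_i$ create a vertex $u_i$. For each variable $x_j$ create two vertices $v_j,v'_j$ (for literals $x_j$, $\overline{x}_j$) joined by an edge. For each clause $c_i$ containing literal $x_j$ (resp. $\overline{x}_j$), join $u_i$ and $v_j$ (resp. $v'_j$) by an $(r-1)$-subdivided edge. Add a 7-clique on new vertices $w_1,\dots,w_7$. For each clause $c_i$ add edges from $u_i$ to $w_1,\dots,w_4$, and if $c_i$ has only 2 literals also an edge from $u_i$ to $w_5$. For each variable $x_j$ add edges from $v_j$ to $w_2,w_3,w_4$ and from $v'_j$ to $w_5,w_6,w_7$. Coloring numbers: for a graph $G=(V,E)$ and a total order $\sigma$ of $V$, a vertex $v\neq u$ is $r$-reachable from $u$ if $u<_\sigma v$ and there is a $u$–$v$ path of length at most $r$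 all of whose vertices other than $u,v$ precede $u$ in $\sigma$; $\mathrm{reach}_r(u,G_\sigma)$ is the set of such $v$, and $\mathrm{col}_r(G)=\min_\sigma\max_u|\mathrm{reach}_r(u,G_\sigma)|$ over all total orders $\sigma$ of $V$. *)

(* Defs.v *)
From mathcomp Require Import all_boot fingroup perm.
Set Implicit Arguments. Unset Strict Implicit. Unset Printing Implicit Defensive.

(* a literal is a pair (b, j) : bool * 'I_n, standing for x_j if b is  *)
(* true and for the negation of x_j if b is false.                     *)

Definition literal (n : nat) := (bool * 'I_n)%type.

Definition two_clause_3sat (n m : nat) (cl : 'I_m -> seq (literal n)) : Prop :=
  (forall i : 'I_m, 2 <= size (cl i) <= 3) /\
  (forall i : 'I_m, uniq (map snd (cl i))) /\
  (forall (j : 'I_n) (b : bool), #|[set i : 'I_m | (b, j) \in cl i]| = 2).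

Definition satisfiable (n m : nat) (cl : 'I_m -> seq (literal n)) : Prop :=
  exists a : 'I_n -> bool, forall i : 'I_m, has (fun l : literal n => a l.2 == l.1) (cl i).

(* A total order sigma of V is represented by a permutation s of V:    *)
(* x <_s y iff the rank of s x in enum V is smaller than that of s y.  *)
(* Every total order of V arises in this way.                          *)

Definition ord_lt (V : finType) (s : {perm V}) (x y : V) : bool :=
  (enum_rank (s x) < enum_rank (s y))%N.

Definition reach (V : finType) (e : rel V) (r : nat) (s : {perm V}) (u : V)
  : {set V} :=
  [set v | ord_lt s u v &&
     [exists k : 'I_r.+1, exists p : k.-tuple V,
        [&& path e u p, last u p == v &
            all (fun x => ord_lt s x u) (behead (belast u p))]]].

Definition col (V : finType) (e : rel V) (r : nat) : nat :=
  \big[minn/#|V|]_(s : {perm V}) \max_(u : V) #|reach e r s u|.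

(*   U i          -- u_i for clause i                                  *)
(*   L j true     -- v_j  (literal x_j)                                *)
(*   L j false    -- v'_j (literal ~x_j)                               *)
(*   S (i,k,t)    -- the t-th (t < r-1) subdivision vertex of the      *)
(*                   (r-1)-subdivided edge from u_i to the vertex of   *)
(*                   the k-th literal of clause i (k < size (cl i))    *)
(*   W k          -- w_{k+1}, k < 7                                    *)

Definition subdiv_t (n m r : nat) (cl : 'I_m -> seq (literal n)) :=
  {x : 'I_m * 'I_3 * 'I_r.-1 | (x.1.2 < size (cl x.1.1))%N}.

Definition gvert (n m r : nat) (cl : 'I_m -> seq (literal n)) : finType :=
  ((('I_m + ('I_n * bool)) + subdiv_t r cl) + 'I_7)%type.

Section Graph.
Variables (n m r : nat) (cl : 'I_m -> seq (literal n)).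

Definition gU (i : 'I_m) : gvert r cl := inl (inl (inl i)).
Definition gL (j : 'I_n) (b : bool) : gvert r cl := inl (inl (inr (j, b))).
Definition gS (x : subdiv_t r cl) : gvert r cl := inl (inr x).
Definition gW (k : 'I_7) : gvert r cl := inr k.

Definition litv (l : literal n) : gvert r cl := gL l.2 l.1.

(* one orientation of every edge *)
Definition gadj0 (x y : gvert r cl) : bool :=
  match x, y with
  | inr k, inr k' => (k < k')%N
  (* u_i -- w_1..w_4, and w_5 if c_i has 2 literals *)
  | inl (inl (inl i)), inr k =>
      (k < 4)%N || ((k == 4 :> nat) && (size (cl i) == 2))
  (* v_j -- w_2, w_3, w_4 ; v'_j -- w_5, w_6, w_7 *)
  | inl (inl (inr (j, b))), inr k =>
      if b then (1 <= k <= 3)%N else (4 <= k)%N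
  | inl (inl (inr (j, true))), inl (inl (inr (j', false))) => j == j'
  | inl (inl (inl i)), inl (inr x) => ((val x).1.1 == i) && ((val x).2 == 0 :> nat)
  | inl (inr x), inl (inr y) => ((val x).1 == (val y).1) && ((val y).2 == (val x).2.+1 :> nat)
  | inl (inr x), inl (inl (inr (j, b))) =>
      ((val x).2 == r.-2 :> nat) && (onth (cl (val x).1.1) (val x).1.2 == Some (b, j))
  | _, _ => false
  end.

Definition gadj : rel (gvert r cl) := fun x y => gadj0 x y || gadj0 y x.

End Graph.

Arguments gadj {n m} r cl : rename.

(* Main.v *)
Require Import Defs.
From mathcomp Require Import all_boot fingroup perm zify.
Set Implicit Arguments. Unset Strict Implicit. Unset Printing Implicit Defensive.
Section Gen.
Variables (V : finType) (e : rel V) (r : nat) (s : {perm V}).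
Local Notation lt := (ord_lt s).
Local Notation R := (reach e r s).

Lemma lt_irr x : lt x x = false.
Proof. by rewrite /ord_lt ltnn. Qed.
Lemma lt_trans x y z : lt x y -> lt y z -> lt x z.
Proof. rewrite /ord_lt; exact: ltn_trans. Qed.
Lemma lt_total x y : x != y -> lt x y || lt y x.
Proof.
move=> nxy; rewrite /ord_lt -neq_ltn; apply: contra nxy => /eqP H.
apply/eqP; apply: (@perm_inj _ s); apply: enum_rank_inj; exact: val_inj.
Qed.
Lemma lt_asym x y : lt x y -> lt y x -> False.
Proof. move=> a b; by have := lt_trans a b; rewrite lt_irr. Qed.
Lemma nlt_lt x y : x != y -> ~~ lt x y -> lt y x.
Proof. by move=> /lt_total /orP [->|]. Qed.

Lemma reach_mem u q1 v : path e u (rcons q1 v) -> size q1 < r ->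
  all (fun x => lt x u) q1 -> lt u v -> v \in R u.
Proof.
move=> Hp Hs Ha Huv; rewrite inE Huv /=.
have Hk : size (rcons q1 v) < r.+1 by rewrite size_rcons.
apply/existsP; exists (Ordinal Hk); apply/existsP; exists (in_tuple (rcons q1 v)).
by rewrite /= Hp last_rcons eqxx belast_rcons /=.
Qed.

Lemma first_reach_gen u q : forall q1, path e u (q1 ++ q) -> size (q1 ++ q) <= r ->
  all (fun x => lt x u) q1 -> u \notin q -> has (lt u) q ->
  exists2 v, v \in q & v \in R u.
Proof.
elim: q => [|x q IH] q1 //= Hp Hs Ha Hu /orP [Hx|Hh].
  exists x; first by rewrite inE eqxx.
  apply: (reach_mem (q1 := q1)) => //.
    by move: Hp; rewrite -cat_rcons cat_path => /andP [].
  by move: Hs; rewrite size_cat /=; lia.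
move: Hu; rewrite inE negb_or => /andP [Hux Hu].
case Hl: (lt u x).
  exists x; first by rewrite inE eqxx.
  apply: (reach_mem (q1 := q1)) => //.
    by move: Hp; rewrite -cat_rcons cat_path => /andP [].
  by move: Hs; rewrite size_cat /=; lia.
have Hxu : lt x u by apply: nlt_lt; rewrite ?Hl // eq_sym.
have [v Hv1 Hv2] : exists2 v, v \in q & v \in R u.
  by apply: (IH (rcons q1 x)); rewrite ?cat_rcons ?all_rcons ?Hxu.
by exists v => //; rewrite inE Hv1 orbT.
Qed.

Lemma first_reach u q : path e u q -> size q <= r -> u \notin q -> has (lt u) q ->
  exists2 v, v \in q & v \in R u.
Proof. by move=> Hp Hs; apply: (@first_reach_gen u q [::]). Qed.

Lemma reach_card u xs : uniq xs -> all (fun x => x \in R u) xs -> size xs <= #|R u|.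
Proof.
move=> Hu Ha; rewrite cardE; apply: uniq_leq_size => // x Hx.
by rewrite mem_enum; exact: (allP Ha).
Qed.

End Gen.
Section G.
Variables (n m r' : nat) (cl : 'I_m -> seq (literal n)).
Local Notation r := r'.+2.
Local Notation V := (gvert r cl).
Local Notation e := (gadj r cl).
Local Notation U := (gU r cl).
Local Notation L := (gL r cl).
Local Notation W := (gW r cl).

Definition isW (x : V) : bool := if x is inr _ then true else false.
Definition isL (x : V) : bool := if x is inl (inl (inr _)) then true else false.
Definition isU (x : V) : bool := if x is inl (inl (inl _)) then true else false.

Lemma e_sym : symmetric e.
Proof. by move=> x y; rewrite /gadj orbC. Qed.

Definition Sv (i : 'I_m) (l t : nat) : V :=
  odflt (U i) (omap (@gS n m r cl) (insub ((i, inord l, inord t) : 'I_m * 'I_3 * 'I_r.-1))).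

Lemma Sv_S i l t : l < size (cl i) -> l < 3 -> t < r'.+1 ->
  exists x : subdiv_t r cl, Sv i l t = gS x /\ val x = (i, inord l, inord t).
Proof.
move=> Hl H3 Ht; rewrite /Sv; case: insubP => [x _ Hx|Hn] /=.
  by exists x.
by move: Hn; rewrite /= inordK // Hl.
Qed.

Lemma isW_Sv i l t : isW (Sv i l t) = false.
Proof. by rewrite /Sv; case: insub. Qed.
Lemma isL_Sv i l t : isL (Sv i l t) = false.
Proof. by rewrite /Sv; case: insub. Qed.

Definition pv (d : literal n) i l t : V :=
  if t < r'.+1 then Sv i l t else litv r cl (nth d (cl i) l).
Definition pathl d i l : seq V := map (pv d i l) (iota 0 r).

Lemma path_iota (f : nat -> V) N : forall a x, (0 < N -> e x (f a)) ->
  (forall t, a <= t -> t.+1 < a + N -> e (f t) (f t.+1)) ->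
  path e x (map f (iota a N)).
Proof.
elim: N => [//|N IH] a x H0 H1 /=.
rewrite H0 //=; apply: IH => [HN|t Ht1 Ht2].
  by apply: H1 => //; lia.
by apply: H1; lia.
Qed.

Lemma onth_nth' (T : Type) (d : T) s l : l < size s -> onth s l = Some (nth d s l).
Proof. by elim: s l => [|x s IH] [|l] //= Hl; apply: IH. Qed.

Lemma path_pathl d i l : l < size (cl i) -> l < 3 -> path e (U i) (pathl d i l).
Proof.
move=> Hl H3; apply: path_iota.
  move=> _; rewrite /pv /=; have [x [-> Hx]] := Sv_S (t:=0) Hl H3 (ltn0Sn _).
  by rewrite /gadj /= Hx /= eqxx inordK.
move=> t _ Ht.
rewrite /pv; case: (ltnP t.+1 r'.+1) => Ht1.
  have [x [-> Hx]] := Sv_S Hl H3 Ht1.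
  have [y [-> Hy]] := Sv_S Hl H3 (ltnW Ht1).
  by rewrite ifT ?(ltnW Ht1) // /gadj /= Hx Hy /= eqxx /= !inordK ?eqxx //; lia.
have Htr : t = r' by lia.
subst t; rewrite ltnSn.
have [x [-> Hx]] := Sv_S Hl H3 (ltnSn r').
rewrite /gadj /litv /= Hx /= inordK // eqxx /= inordK //.
by rewrite (onth_nth' d Hl) -surjective_pairing eqxx.
Qed.


Lemma iota_r : iota 0 r = rcons (iota 0 r'.+1) r'.+1.
Proof. by rewrite -addn1 iotaD /= cats1. Qed.

Lemma belast_pathl d i l :
  belast (U i) (pathl d i l) = U i :: map (Sv i l) (iota 0 r'.+1).
Proof.
rewrite /pathl iota_r map_rcons belast_rcons; congr (_ :: _).
by apply/eq_in_map => t; rewrite mem_iota /pv => /andP [_ ->].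
Qed.

Lemma last_pathl d i l : last (U i) (pathl d i l) = litv r cl (nth d (cl i) l).
Proof. by rewrite /pathl iota_r map_rcons last_rcons /pv ltnn. Qed.

Lemma size_pathl d i l : size (pathl d i l) = r.
Proof. by rewrite size_map size_iota. Qed.

Lemma isW_pv d i l t : isW (pv d i l t) = false.
Proof. by rewrite /pv; case: ifP => _; rewrite ?isW_Sv. Qed.

Lemma isU_pv d i l t : l < size (cl i) -> l < 3 -> isU (pv d i l t) = false.
Proof.
move=> Hl H3; rewrite /pv; case: ifP => // Ht.
by have [x [-> _]] := Sv_S Hl H3 Ht.
Qed.

Lemma litv_pathl d i l : litv r cl (nth d (cl i) l) \in pathl d i l.
Proof.
rewrite /pathl (_ : litv r cl _ = pv d i l r'.+1); last by rewrite /pv ltnn.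
by apply: map_f; rewrite mem_iota add0n ltnSn.
Qed.

Lemma pathl_disj d i l l' x : uniq (map snd (cl i)) ->
  l < size (cl i) -> l < 3 -> l' < size (cl i) -> l' < 3 ->
  x \in pathl d i l -> x \in pathl d i l' -> l = l'.
Proof.
move=> Hu Hl H3 Hl' H3' /mapP [t _ ->] /mapP [t' _].
rewrite /pv; case: ifP => Ht; case: ifP => Ht'.
- have [x1 [-> Hx1]] := Sv_S Hl H3 Ht.
  have [x2 [-> Hx2]] := Sv_S Hl' H3' Ht'.
  move=> [] Ex; move: Hx1 Hx2; rewrite Ex => -> [] /(congr1 val).
  by rewrite /= !inordK.
- by have [x1 [-> _]] := Sv_S Hl H3 Ht.
- by have [x2 [-> _]] := Sv_S Hl' H3' Ht'.
rewrite /litv /gL => -[] E _.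
apply/eqP; rewrite -(nth_uniq d.2 (s := map snd (cl i))) ?size_map //.
by rewrite !(nth_map d) // E.
Qed.

Lemma adj_UW i (k : 'I_7) : (k < 4) || ((k == 4 :> nat) && (size (cl i) == 2)) -> e (U i) (W k).
Proof. by rewrite /gadj /= => ->. Qed.

Lemma adj_LL j b : e (L j b) (L j (~~ b)).
Proof. by case: b; rewrite /gadj /= eqxx ?orbT. Qed.

Lemma adj_LW j b (k : 'I_7) : k != ord0 -> e (L j b) (W k) || e (L j (~~ b)) (W k).
Proof.
by case: b; case: k => [[|[|[|[|[|[|[|k]]]]]]] Hk] //.
Qed.

Lemma adj_WW (k k' : 'I_7) : k != k' -> e (W k) (W k').
Proof. by move=> H; rewrite /gadj /= -neq_ltn. Qed.

Lemma adj_WU (k : 'I_7) i : k < 4 -> e (W k) (U i).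
Proof. by rewrite /gadj /= => ->. Qed.

Lemma adj_WL (k : 'I_7) j : 4 <= k -> e (W k) (L j false).
Proof. by rewrite /gadj /= => ->. Qed.


Section Main.
Variables (Hsz : forall i, 2 <= size (cl i) <= 3)
  (Hun : forall i, uniq (map snd (cl i)))
  (s : {perm V}) (Hs : forall u, #|reach e r s u| <= 6).
Local Notation lt := (ord_lt s).
Local Notation R := (reach e r s).

Lemma WWuniq (ks : 'I_7) (x : V) : ~~ isW x ->
  uniq (x :: map W (rem ks (enum 'I_7))).
Proof.
move=> Hx /=; apply/andP; split.
  by apply/mapP => -[k _ Ek]; move: Hx; rewrite Ek.
rewrite map_inj_uniq; first by rewrite rem_uniq ?enum_uniq.
by move=> a b [].
Qed.

Lemma WWsize (ks : 'I_7) (x : V) : size (x :: map W (rem ks (enum 'I_7))) = 7.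
Proof. by rewrite /= size_map size_rem ?mem_enum // size_enum_ord. Qed.

Lemma WWmem (ks k : 'I_7) : k \in rem ks (enum 'I_7) -> k != ks.
Proof. by rewrite mem_rem_uniq ?enum_uniq // inE => /andP []. Qed.

Lemma too_many u (ks : 'I_7) x : ~~ isW x -> x \in R u ->
  (forall k, k != ks -> W k \in R u) -> False.
Proof.
move=> Hx Hxr HW.
have := @reach_card V e r s u _ (WWuniq ks Hx).
rewrite WWsize => H.
suff Hall : all (fun y => y \in R u) (x :: map W (rem ks (enum 'I_7))).
  by have := leq_trans (H Hall) (Hs u).
apply/allP => y; rewrite inE => /orP [/eqP -> //|/mapP [k Hk ->]].
by apply: HW; apply: WWmem.
Qed.

Definition ks : 'I_7 := [arg min_(k < (ord0 : 'I_7)) enum_rank (s (W k))].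
Local Notation ws := (W ks).

Lemma ks_min k : k != ks -> lt ws (W k).
Proof.
rewrite /ks; case: arg_minnP => // k0 _ Hmin Hk.
apply: nlt_lt; first by apply: contra Hk => /eqP [] ->.
by rewrite /ord_lt -leqNgt Hmin.
Qed.

Lemma ws_le x : lt x ws -> forall k, lt x (W k).
Proof.
move=> H k; case: (eqVneq k ks) => [->//|Hk].
exact: lt_trans H (ks_min Hk).
Qed.

Lemma W7 x : ~~ isW x -> x \in R ws -> False.
Proof.
move=> Hx Hr; apply: (too_many (ks := ks) Hx Hr) => k Hk.
apply: (reach_mem (q1 := [::])) => //=; last exact: ks_min.
by rewrite adj_WW // eq_sym.
Qed.


Lemma W1 x : ~~ isW x -> e ws x -> lt x ws.
Proof.
move=> Hx He; apply: nlt_lt; first by apply/eqP => Ex; move: Hx; rewrite -Ex.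
apply/negP => Hl; apply: (W7 Hx); apply: (reach_mem (q1 := [::])) => //=.
by rewrite He.
Qed.

Lemma W2 x y : ~~ isW x -> ~~ isW y -> e ws x -> e x y -> lt y ws.
Proof.
move=> Hx Hy Hwx Hxy; have Hx1 := W1 Hx Hwx.
apply: nlt_lt; first by apply/eqP => Ex; move: Hy; rewrite -Ex.
apply/negP => Hl; apply: (W7 Hy); apply: (reach_mem (q1 := [:: x])) => //=.
  by rewrite Hwx Hxy.
by rewrite Hx1.
Qed.

Lemma KEY d i l : l < size (cl i) ->
  lt (L (nth d (cl i) l).2 (~~ (nth d (cl i) l).1)) (L (nth d (cl i) l).2 (nth d (cl i) l).1) ->
  lt (L (nth d (cl i) l).2 (nth d (cl i) l).1) ws ->
  lt (L (nth d (cl i) l).2 (nth d (cl i) l).1) (U i) -> False.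
Proof.
have H3 : l < size (cl i) -> l < 3 by move=> Hl; have := Hsz i; lia.
move=> Hl; have {}H3 := H3 Hl.
set y := nth d (cl i) l; set z := L y.2 y.1; set z' := L y.2 (~~ y.1).
move=> Hzz Hzw Hzu.
pose q := rev (belast (U i) (pathl d i l)).
have Hlast : last (U i) (pathl d i l) = z by rewrite last_pathl.
have Hq : path e z q.
  rewrite /q -Hlast rev_path.
  by rewrite (eq_path (e' := e)) ?path_pathl // => a b; rewrite e_sym.
have Hqs : size q <= r by rewrite size_rev size_belast size_pathl.
have Hzq : z \notin q.
  rewrite /q belast_pathl mem_rev inE negb_or; apply/andP; split => //.
  by apply/mapP => -[t _ Et]; move: (isL_Sv i l t); rewrite -Et.
have Hhas : has (lt z) q.
  by apply/hasP; exists (U i) => //; rewrite /q belast_pathl mem_rev inE eqxx.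
have [v Hvq Hvr] := first_reach Hq Hqs Hzq Hhas.
have Hv : ~~ isW v.
  move: Hvq; rewrite /q belast_pathl mem_rev inE => /orP [/eqP -> //|/mapP [t _ ->]].
  by rewrite isW_Sv.
apply: (too_many (ks := ord0) Hv Hvr) => k Hk.
have Hzk := ws_le Hzw k.
case/orP: (adj_LW y.2 y.1 Hk) => Hadj.
  by apply: (reach_mem (q1 := [::])) => //=; rewrite Hadj.
apply: (reach_mem (q1 := [:: z'])) => //=.
  by rewrite adj_LL Hadj.
by rewrite Hzz.
Qed.


Lemma clause_ok i :
  has (fun y : literal n => (lt (L y.2 true) (L y.2 false)) == y.1) (cl i).
Proof.
case Hh: has => //; exfalso.
move/negbT/hasPn: Hh => Hno.
have Hmax : forall y, y \in cl i -> lt (L y.2 (~~ y.1)) (L y.2 y.1).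
  move=> [b j] /Hno /=; case: b => /= H.
    by apply: nlt_lt; [apply/eqP => -[] | move: H; case: (lt _ _)].
  by move: H; case: (lt _ _).
have [d _] : exists d : literal n, True.
  by move: (Hsz i); case: (cl i) => [|d0 ?] //; exists d0.
have Hsi := Hsz i.
have H3 l : l < size (cl i) -> l < 3 by lia.
case: (boolP (lt (U i) ws)) => Hu.
- have [l Hl Hn] : exists2 l, l < size (cl i) & ~~ has (lt (U i)) (pathl d i l).
    case: (boolP (all (fun l => has (lt (U i)) (pathl d i l)) (iota 0 (size (cl i))))) => Hall; last first.
      by move/allPn: Hall => [l]; rewrite mem_iota => /andP [_ Hl] Hn; exists l.
    exfalso.
    have Hx : forall l, l < size (cl i) -> exists2 x, x \in pathl d i l & x \in R (U i).
      move=> l Hl; apply: first_reach.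
      - exact: path_pathl Hl (H3 l Hl).
      - by rewrite size_pathl.
      - by apply/mapP => -[t _ Et]; have := isU_pv d t Hl (H3 _ Hl); rewrite -Et.
      - by apply: (allP Hall); rewrite mem_iota.
    pose xs l := odflt (U i) [pick x | (x \in pathl d i l) && (x \in R (U i))].
    have Hxs : forall l, l < size (cl i) -> xs l \in pathl d i l /\ xs l \in R (U i).
      move=> l Hl; rewrite /xs; case: pickP => [x /andP [H1 H2] | H0] //=.
      by exfalso; have [x H1 H2] := Hx l Hl; move: (H0 x); rewrite H1 H2.
    pose Ws := map (fun k => W (inord k)) (iota 0 (7 - size (cl i))).
    pose Xs := map xs (iota 0 (size (cl i))).
    have Hxw : forall l, l < size (cl i) -> isW (xs l) = false.
      by move=> l /Hxs [/mapP [t _ ->] _]; rewrite isW_pv.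
    have Hun' : uniq (Ws ++ Xs).
      rewrite cat_uniq; apply/and3P; split.
      + rewrite map_inj_in_uniq ?iota_uniq // => a b; rewrite !mem_iota => Ha Hb [] /(congr1 val).
        by rewrite /= !inordK //; lia.
      + apply/hasPn => x /mapP [l Hl ->]; apply/mapP => -[k _ Ek].
        by move: Hl; rewrite mem_iota /= => /Hxw; rewrite Ek.
      + rewrite map_inj_in_uniq ?iota_uniq // => a b; rewrite !mem_iota => /= Ha Hb Eab.
        have [Ha1 _] := Hxs a Ha; have [Hb1 _] := Hxs b Hb.
        by apply: (pathl_disj (Hun i) Ha (H3 _ Ha) Hb (H3 _ Hb) Ha1); rewrite Eab.
    have Hall' : all (fun x => x \in R (U i)) (Ws ++ Xs).
      apply/allP => x; rewrite mem_cat => /orP [/mapP [k Hk ->]| /mapP [l Hl ->]].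
      + move: Hk; rewrite mem_iota /= => Hk.
        apply: (reach_mem (q1 := [::])) => //=; last exact: ws_le.
        rewrite adj_UW // inordK; last by lia.
        case: (ltnP k 4) => Hk4 //=; apply/andP; split; apply/eqP; lia.
      + by move: Hl; rewrite mem_iota /= => /Hxs [].
    have := leq_trans (reach_card Hun' Hall') (Hs (U i)).
    by rewrite size_cat !size_map !size_iota subnK //; lia.
  set y := nth d (cl i) l.
  have Hy : y \in cl i := mem_nth d Hl.
  have Hyu : lt (litv r cl y) (U i).
    apply: nlt_lt; first by apply/eqP => -[].
    apply/negP => H; move/hasP: Hn; apply; exists (litv r cl y) => //.
    exact: litv_pathl.
  exact: (KEY Hl (Hmax _ Hy) (lt_trans Hyu Hu) Hyu).
- have Hwu : lt ws (U i) by apply: nlt_lt => //; apply/eqP => -[].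
  have H0 : 0 < size (cl i) by lia.
  set y := nth d (cl i) 0.
  have Hy : y \in cl i := mem_nth d H0.
  have Hzw : lt (L y.2 y.1) ws.
    case: (ltnP ks 4) => Hk.
      by exfalso; have := W1 (x := U i) isT (adj_WU _ Hk); apply: lt_asym.
    have Hv' := W1 (x := L y.2 false) isT (adj_WL _ Hk).
    have Hv := W2 (x := L y.2 false) (y := L y.2 true) isT isT (adj_WL _ Hk) (adj_LL y.2 false).
    by case: (y.1).
  exact: (KEY H0 (Hmax _ Hy) Hzw (lt_trans Hzw Hwu)).
Qed.

End Main.

End G.

Theorem lemma3p15 (r n m : nat) (cl : 'I_m -> seq (literal n)) :
  (2 <= r)%N ->
  two_clause_3sat cl ->
  (col (gadj r cl) r <= 6)%N ->
  satisfiable cl.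
Proof.
case: r => [|[|r']] // _ [Hsz [Hun _]] Hcol.
have [s Hs] : exists s : {perm gvert r'.+2 cl},
    forall u, #|reach (gadj r'.+2 cl) r'.+2 s u| <= 6.
  have [s Hs] : exists s : {perm gvert r'.+2 cl},
      \max_u #|reach (gadj r'.+2 cl) r'.+2 s u| <= 6.
    move: Hcol; rewrite /col.
    apply: (big_ind (fun y => y <= 6 -> exists s : {perm gvert r'.+2 cl},
      \max_u #|reach (gadj r'.+2 cl) r'.+2 s u| <= 6)).
    - move=> H; exfalso.
      have : size (map (gW r'.+2 cl) (enum 'I_7)) <= size (enum (gvert r'.+2 cl)).
        apply: uniq_leq_size.
          by rewrite map_inj_uniq ?enum_uniq // => a b [].
        by move=> x _; rewrite mem_enum.
      by rewrite size_map size_enum_ord -cardE => /leq_trans /(_ H).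
    - by move=> x y Hx Hy; rewrite geq_min => /orP [/Hx|/Hy].
    - by move=> s' _ H; exists s'.
  exists s => u; apply: leq_trans _ Hs; exact: leq_bigmax.
exists (fun j => ord_lt s (gL r'.+2 cl j true) (gL r'.+2 cl j false)) => i.
exact: (clause_ok Hsz Hun Hs).
Qed.
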